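(* Let $n\ge2$, $\mathbb F\in\{\mathbb R,\mathbb C\}$, $A=(a^k_j)$ an $(n-1)\times(n-1)$ matrix over $\mathbb F$, and $\mathfrak a_A$ the Lie algebra with basis $e_1,\dots,e_n$ whose only nonzero brackets are $[e_j,e_n]=\sum_{k=1}^{n-1}a^k_je_k$, $j=1,\dots,n-1$ (and their antisymmetric counterparts). Let $\lambda_1,\dots,\lambda_{n-1}$ be the roots in $\mathbb C$ (with multiplicity) of the characteristic polynomial of $A$. If $p,q\in\mathbb N$ are such that $\mathrm{tr}(A^p)=\sum_i\lambda_i^p\ne0$, $\mathrm{tr}(A^q)=\sum_i\lambda_i^q\ne0$ and $\mathrm{tr}(A^{p+q})=\sum_i\lambda_i^{p+q}\ne0$, then $\mathfrak C_{pq}(\mathfrak a_A)$ is well defined and $$\mathfrak C_{pq}(\mathfrak a_A)=\frac{\mathrm{tr}(A^p)\,\mathrm{tr}(A^q)}{\mathrm{tr}(A^{p+q})}=\frac{(\lambda_1^p+\dots+\lambda_{n-1}^p)(\lambda_1^q+\dots+\lambda_{n-1}^q)}{\lambda_1^{p+q}+\dots+\lambda_{n-1}^{p+q}}.$$ Moreover, the rank of $\mathfrak a_A$ (the dimension of its Cartan subalgebras) equals the multiplicity of $0$ as a root of the characteristic polynomial of $A$, plus one.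
   Context: For $p,q\in\mathbb N$, $\mathfrak C_{pq}(\mathfrak g)$ is said to be well defined if there exist $u,v\in\mathfrak g$ with $\mathrm{tr}(\mathrm{ad}_u^{\,p})\ne0$, $\mathrm{tr}(\mathrm{ad}_v^{\,q})\ne0$, $\mathrm{tr}(\mathrm{ad}_u^{\,p}\mathrm{ad}_v^{\,q})\ne0$, and the value $\mathrm{tr}(\mathrm{ad}_u^{\,p})\,\mathrm{tr}(\mathrm{ad}_v^{\,q})/\mathrm{tr}(\mathrm{ad}_u^{\,p}\mathrm{ad}_v^{\,q})$ is the same for all such pairs $(u,v)$; this common value is $\mathfrak C_{pq}(\mathfrak g)$. *)

(* Defs.v *)
From HB Require Import structures.
From mathcomp Require Import all_boot all_order all_algebra.
From mathcomp Require Import reals.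
From mathcomp.real_closed Require Import complex.
Set Implicit Arguments. Unset Strict Implicit. Unset Printing Implicit Defensive.
Import Order.TTheory GRing.Theory Num.Theory.
Local Open Scope ring_scope.

(* The Lie algebra a_A on F^(m+1) (n = m+1), elements are row vectors,      *)
(* basis e_1..e_n = delta_mx 0 i, with e_n = the index ord_max.            *)

Section LieAlg.
Variables (F : fieldType) (m : nat) (A : 'M[F]_m).

(* For i = e_j with j < n : the vector sum_k a^k_j e_k  (a^k_j = A k j);
   for i = e_n : 0. *)
Definition aA_col (i : 'I_m.+1) : 'rV[F]_m.+1 :=
  match unlift ord_max i with
  | Some j => \row_k (match unlift ord_max k with Some k' => A k' j | None => 0 end)
  | None => 0
  end.

Definition aA_br_basis (i j : 'I_m.+1) : 'rV[F]_m.+1 :=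
  if j == ord_max then aA_col i
  else if i == ord_max then - aA_col j else 0.

Definition aA_bracket (u v : 'rV[F]_m.+1) : 'rV[F]_m.+1 :=
  \sum_(i < m.+1) \sum_(j < m.+1) (u 0 i * v 0 j) *: aA_br_basis i j.

(* matrix of ad_u (acting on row vectors: v *m aA_ad u = [u, v]) *)
Definition aA_ad (u : 'rV[F]_m.+1) : 'M[F]_m.+1 :=
  \matrix_(i < m.+1) aA_bracket u (delta_mx 0 i).

Definition Cpq_admissible (p q : nat) (u v : 'rV[F]_m.+1) : Prop :=
  [/\ \tr (aA_ad u ^+ p) != 0, \tr (aA_ad v ^+ q) != 0
    & \tr (aA_ad u ^+ p *m aA_ad v ^+ q) != 0].

Definition Cpq_well_defined_eq (p q : nat) (c : F) : Prop :=
  (exists u v, Cpq_admissible p q u v) /\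
  (forall u v, Cpq_admissible p q u v ->
     \tr (aA_ad u ^+ p) * \tr (aA_ad v ^+ q) / \tr (aA_ad u ^+ p *m aA_ad v ^+ q) = c).

(* ---- Cartan subalgebras; a subspace is the row space of a square matrix ---- *)
Definition aA_subalgebra (S : 'M[F]_m.+1) : Prop :=
  forall u v : 'rV[F]_m.+1, (u <= S)%MS -> (v <= S)%MS -> (aA_bracket u v <= S)%MS.

Fixpoint aA_lcs (S : 'M[F]_m.+1) (k : nat) : 'M[F]_m.+1 :=
  match k with
  | 0 => S
  | k'.+1 => (\sum_(i < m.+1) \sum_(j < m.+1)
               <<aA_bracket (row i S) (row j (aA_lcs S k'))>>)%MS
  end.

Definition aA_nilpotent (S : 'M[F]_m.+1) : Prop := exists k, aA_lcs S k = 0.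

Definition aA_self_normalizing (S : 'M[F]_m.+1) : Prop :=
  forall x : 'rV[F]_m.+1,
    (forall s : 'rV[F]_m.+1, (s <= S)%MS -> (aA_bracket x s <= S)%MS) -> (x <= S)%MS.

Definition aA_cartan (S : 'M[F]_m.+1) : Prop :=
  [/\ aA_subalgebra S, aA_nilpotent S & aA_self_normalizing S].

End LieAlg.

(* The conclusion of the lemma for a field F, with iota : F -> C an embedding
   into an algebraically closed field in which the char. polynomial splits. *)
Definition lemma2_concl (F C : fieldType) (iota : {rmorphism F -> C})
   (m : nat) (A : 'M[F]_m) : Prop :=
  (forall p q : nat, (0 < p)%N -> (0 < q)%N ->
     \tr (A ^+ p) != 0 -> \tr (A ^+ q) != 0 -> \tr (A ^+ (p + q)) != 0 ->
     Cpq_well_defined_eq A p q (\tr (A ^+ p) * \tr (A ^+ q) / \tr (A ^+ (p + q)))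
     /\ (forall lam : 'I_m -> C,
           char_poly (map_mx iota A) = \prod_(i < m) ('X - (lam i)%:P) ->
           iota (\tr (A ^+ p) * \tr (A ^+ q) / \tr (A ^+ (p + q)))
           = (\sum_i lam i ^+ p) * (\sum_i lam i ^+ q) / (\sum_i lam i ^+ (p + q))))
  /\
  ((exists S, aA_cartan A S) /\
   (forall S, aA_cartan A S -> \rank S = (mup 0 (char_poly A)).+1)).

(* Main.v *)
Require Import Defs.
From HB Require Import structures.
From mathcomp Require Import all_boot all_order all_algebra.
From mathcomp Require Import reals ring.
From mathcomp.real_closed Require Import complex.
Set Implicit Arguments. Unset Strict Implicit. Unset Printing Implicit Defensive.
Import Order.TTheory GRing.Theory Num.Theory.
Local Open Scope ring_scope.
Section Setup.
Variables (F : fieldType) (m : nat) (A : 'M[F]_m).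
Local Notation n := m.

Definition Em : 'M[F]_(n, n.+1) := \matrix_(i, j) (lift ord_max i == j)%:R.
Definition en : 'rV[F]_n.+1 := delta_mx 0 ord_max.
Definition enc : 'cV[F]_n.+1 := delta_mx ord_max 0.
Definition Bm := A^T.

Lemma sum_liftr (f : 'I_n -> F) j : \sum_k f k * (lift ord_max k == j)%:R
   = if unlift ord_max j is Some k then f k else 0.
Proof.
case: unliftP => [k ->|->].
  rewrite (bigD1 k) //= eqxx mulr1 big1 ?addr0 // => i /negbTE.
  by rewrite (inj_eq (@lift_inj _ _)) => ->; rewrite mulr0.
by rewrite big1 // => i _; rewrite lift_eqF mulr0.
Qed.

Lemma sum_liftl (f : 'I_n.+1 -> F) k :
  \sum_j (lift ord_max k == j)%:R * f j = f (lift ord_max k).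
Proof.
rewrite (bigD1 (lift ord_max k)) //= eqxx mul1r big1 ?addr0 // => i.
by rewrite eq_sym => /negbTE ->; rewrite mul0r.
Qed.

Lemma EmEmT : Em *m Em^T = 1%:M.
Proof.
apply/matrixP => i j; rewrite !mxE.
rewrite (eq_bigr (fun k => (lift ord_max j == k)%:R * (lift ord_max i == k)%:R)).
  by rewrite sum_liftl (inj_eq (@lift_inj _ _)) eq_sym.
by move=> k _; rewrite !mxE mulrC.
Qed.

Lemma Em_enc : Em *m enc = 0.
Proof.
apply/matrixP => i j; rewrite !mxE.
rewrite (eq_bigr (fun k => (lift ord_max i == k)%:R * (k == ord_max)%:R)).
  by rewrite sum_liftl lift_eqF.
by move=> k _; rewrite !mxE ord1 eqxx andbT.
Qed.

Lemma en_enc : en *m enc = 1%:M.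
Proof.
apply/matrixP => i j; rewrite !mxE (bigD1 ord_max) //= big1.
  by rewrite !mxE !eqxx !ord1 addr0 mulr1.
by move=> k /negbTE; rewrite !mxE => ->; rewrite andbF mul0r.
Qed.

Lemma en_EmT : en *m Em^T = 0.
Proof. by rewrite -[en]trmxK -trmx_mul /en trmx_delta Em_enc trmx0. Qed.

Lemma decomp1 : enc *m en + Em^T *m Em = 1%:M.
Proof.
apply/matrixP => i j; rewrite !mxE.
rewrite (eq_bigr (fun k => (lift ord_max k == i)%:R * (lift ord_max k == j)%:R));
  last by move=> k _; rewrite !mxE.
rewrite (bigD1 0) //= big1 ?addr0; last by move=> k; rewrite ord1.
rewrite !mxE !eqxx /=.
case: (unliftP ord_max i) => [i' ->|->].
  rewrite (eq_bigr (fun k => (lift ord_max i' == lift ord_max k)%:R * (lift ord_max k == j)%:R)).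
    2: by move=> k _; rewrite eq_sym.
  rewrite (bigD1 i') //= eqxx mul1r big1 ?addr0.
    by rewrite lift_eqF mul0r add0r.
  by move=> k /negbTE; rewrite (inj_eq (@lift_inj _ _)) eq_sym => ->; rewrite mul0r.
rewrite big1; last by move=> k _; rewrite lift_eqF mul0r.
by rewrite addr0 eqxx mul1r eq_sym.
Qed.

Definition tt (u : 'rV[F]_n.+1) : F := (u *m enc) 0 0.

Lemma ttE u : tt u = u 0 ord_max.
Proof.
rewrite /tt mxE (bigD1 ord_max) //= big1.
  by rewrite !mxE !eqxx mulr1 addr0.
by move=> k /negbTE; rewrite !mxE => ->; rewrite mulr0.
Qed.

Lemma tt_mul u : u *m enc = (tt u)%:M.
Proof. by rewrite /tt -mx11_scalar. Qed.

Lemma aA_colE i : aA_col A i = delta_mx 0 i *m Em^T *m Bm *m Em.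
Proof.
apply/rowP => k; rewrite /aA_col.
case: (unliftP ord_max i) => [i' ->|->].

  have -> : delta_mx 0 (lift ord_max i') *m Em^T = delta_mx 0 i' :> 'rV[F]_n.
    apply/rowP => l; rewrite !mxE (bigD1 (lift ord_max i')) //= big1.
      rewrite !mxE !eqxx mul1r addr0 (inj_eq (@lift_inj _ _)).
      by rewrite eq_sym.
    by move=> t /negbTE; rewrite !mxE eq_sym => ->; rewrite andbF mul0r.
  rewrite !mxE.
  rewrite (eq_bigr (fun k0 => (A k0 i') * (lift ord_max k0 == k)%:R)).
    by rewrite sum_liftr.
  move=> l _; rewrite !mxE; congr (_ * _).
  rewrite (bigD1 i') //= big1 ?addr0; first by rewrite !mxE !eqxx mul1r.
  by move=> t /negbTE; rewrite !mxE eq_sym => ->; rewrite andbF mul0r.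

have -> : delta_mx 0 ord_max *m Em^T = 0 :> 'rV[F]_n by exact: en_EmT.
by rewrite !mul0mx mxE.
Qed.

Lemma colsum (u : 'rV[F]_n.+1) :
  \sum_i u 0 i *: aA_col A i = u *m Em^T *m Bm *m Em.
Proof.
rewrite {2}(row_sum_delta u) !mulmx_suml; apply: eq_bigr => i _.
by rewrite aA_colE !scalemxAl.
Qed.

Definition vp (u : 'rV[F]_n.+1) := u *m Em^T.

Lemma brE u v : aA_bracket A u v =
  (tt v *: (vp u *m Bm) - tt u *: (vp v *m Bm)) *m Em.
Proof.
rewrite /aA_bracket.
have col0 : aA_col A ord_max = 0 by rewrite /aA_col unlift_none.
rewrite (eq_bigr (fun i => (u 0 i * v 0 ord_max) *: aA_col A i +
     \sum_(j < n.+1 | j != ord_max) (u 0 i * v 0 j) *: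
        (if i == ord_max then - aA_col A j else 0))); last first.
  move=> i _; rewrite (bigD1 ord_max) //= /aA_br_basis eqxx; congr (_ + _).
  by apply: eq_bigr => j /negbTE ->.
rewrite big_split /=.
have -> : \sum_(i < n.+1) (u 0 i * v 0 ord_max) *: aA_col A i
    = v 0 ord_max *: \sum_i u 0 i *: aA_col A i.
  by rewrite scaler_sumr; apply: eq_bigr => i _; rewrite scalerA mulrC.
have -> : \sum_(i < n.+1) \sum_(j < n.+1 | j != ord_max) (u 0 i * v 0 j) *:
        (if i == ord_max then - aA_col A j else 0)
   = - (u 0 ord_max *: \sum_j v 0 j *: aA_col A j).
  rewrite (bigD1 ord_max (P := xpredT)) //= eqxx [X in _ + X]big1 ?addr0; last first.
    by move=> i /negbTE ->; rewrite big1 // => j _; rewrite scaler0.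
  rewrite (bigD1 ord_max (P := xpredT)) //= col0 scaler0 add0r.
  rewrite scaler_sumr -sumrN; apply: eq_bigr => j _.
  by rewrite scalerN scalerA.
by rewrite !colsum -!ttE /vp mulmxBl -!scalemxAl.
Qed.

End Setup.
Section Trace.
Variables (F : fieldType) (m : nat) (A : 'M[F]_m).
Local Notation n := m.
Local Notation Em := (@Em F n).
Local Notation en := (@en F n).
Local Notation enc := (@enc F n).
Local Notation B := (Bm A).

Definition Tm (D : 'M[F]_n) (r : 'rV[F]_n.+1) : 'M[F]_n.+1 :=
  Em^T *m D *m Em + enc *m r.

Lemma brM u v : aA_bracket A u v =
   v *m Tm ((- tt u) *: B) (vp u *m B *m Em).
Proof.
rewrite brE /Tm mulmxDr !mulmxA tt_mul mul_scalar_mx mulmxBl.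
by rewrite -!scalemxAl -scalemxAr -scalemxAl scaleNr addrC /vp.
Qed.

Lemma adE u : aA_ad A u = Tm ((- tt u) *: B) (vp u *m B *m Em).
Proof.
by apply/row_matrixP => i; rewrite rowK brM rowE.
Qed.

Lemma TmM D1 r1 D2 r2 : r1 *m enc = 0 ->
  Tm D1 r1 *m Tm D2 r2 = Tm (D1 *m D2) (r1 *m Em^T *m D2 *m Em).
Proof.
move=> r1e; rewrite /Tm mulmxDl !mulmxDr.
have h1 : Em^T *m D1 *m Em *m (Em^T *m D2 *m Em) = Em^T *m (D1 *m D2) *m Em.
  by rewrite !mulmxA -[Em^T *m D1 *m Em *m Em^T]mulmxA EmEmT mulmx1.
have h2 : Em^T *m D1 *m Em *m (enc *m r2) = 0.
  by rewrite mulmxA -[Em^T *m D1 *m Em *m enc]mulmxA Em_enc mulmx0 mul0mx.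
have h3 : enc *m r1 *m (enc *m r2) = 0.
  by rewrite mulmxA -[enc *m r1 *m enc]mulmxA r1e mulmx0 mul0mx.
by rewrite h1 h2 h3 addr0 addr0 !mulmxA.
Qed.

Lemma trTm D r : r *m enc = 0 -> \tr (Tm D r) = \tr D.
Proof.
move=> re; rewrite /Tm mxtraceD mxtrace_mulC mulmxA EmEmT mul1mx.
by rewrite mxtrace_mulC re mxtrace0 addr0.
Qed.

Lemma ad_exp u p : exists2 r, r *m enc = 0 &
  aA_ad A u ^+ p.+1 = Tm (((- tt u) *: B) ^+ p.+1) r.
Proof.
elim: p => [|p [r re IH]].
  by exists (vp u *m B *m Em); rewrite ?expr1 ?adE // -mulmxA Em_enc mulmx0.
exists (r *m Em^T *m ((- tt u) *: B) *m Em).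
  by rewrite -mulmxA Em_enc mulmx0.
rewrite exprSr IH adE; apply: etrans (TmM _ _ _ re) _.
by rewrite [in RHS]exprSr.
Qed.

Lemma tr_trmxX k : \tr (B ^+ k) = \tr (A ^+ k).
Proof.
have -> : B ^+ k = (A ^+ k)^T.
  elim: k => [|k IH]; first by rewrite !expr0 trmx1.
  by rewrite exprSr IH exprS -!mulmxE trmx_mul.
by rewrite mxtrace_tr.
Qed.

Lemma expZ (c : F) (D : 'M[F]_n) k : (c *: D) ^+ k = c ^+ k *: D ^+ k.
Proof.
elim: k => [|k IH]; first by rewrite !expr0 scale1r.
rewrite !exprSr IH; apply: etrans (_ : (c ^+ k *: D ^+ k) *m (c *: D) = _) _ => //.
by rewrite -scalemxAl -scalemxAr scalerA.
Qed.

Lemma tr_ad u p : \tr (aA_ad A u ^+ p.+1) = (- tt u) ^+ p.+1 * \tr (A ^+ p.+1).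
Proof.
have [r re ->] := ad_exp u p.
by rewrite trTm // expZ mxtraceZ tr_trmxX.
Qed.

Lemma tr_adM u v p q : \tr (aA_ad A u ^+ p.+1 *m aA_ad A v ^+ q.+1) =
  (- tt u) ^+ p.+1 * (- tt v) ^+ q.+1 * \tr (A ^+ (p.+1 + q.+1)).
Proof.
have [r re ->] := ad_exp u p; have [r' re' ->] := ad_exp v q.
rewrite TmM // trTm; last by rewrite -mulmxA Em_enc mulmx0.
by rewrite !expZ -scalemxAl -scalemxAr !mxtraceZ mulmxE -exprD tr_trmxX mulrA.
Qed.

Lemma tt_en : tt en = 1.
Proof. by rewrite /tt en_enc mxE. Qed.

Lemma Cpq_part p q : (0 < p)%N -> (0 < q)%N ->
  \tr (A ^+ p) != 0 -> \tr (A ^+ q) != 0 -> \tr (A ^+ (p + q)) != 0 ->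
  Cpq_well_defined_eq A p q (\tr (A ^+ p) * \tr (A ^+ q) / \tr (A ^+ (p + q))).
Proof.
case: p => // p; case: q => // q _ _ hp hq hpq; split.
  exists en, en; split; rewrite ?tr_adM ?tr_ad tt_en.
  - by rewrite mulf_neq0 // expf_neq0 // oppr_eq0 oner_eq0.
  - by rewrite mulf_neq0 // expf_neq0 // oppr_eq0 oner_eq0.
  - by rewrite !mulf_neq0 // expf_neq0 // oppr_eq0 oner_eq0.
move=> u v [hu hv huv]; move: huv; rewrite !tr_adM !tr_ad => huv.
have ha : (- tt u) ^+ p.+1 != 0 by move: huv; rewrite -mulrA mulf_eq0 negb_or => /andP[].
have hb : (- tt v) ^+ q.+1 != 0.
  by move: huv; rewrite mulf_eq0 negb_or => /andP[]; rewrite mulf_eq0 negb_or => /andP[].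
field.
by rewrite ha hb hpq.
Qed.

End Trace.
Section LinAlg.
Variable F : fieldType.

Lemma map_mxXn n (M : 'M[F]_n) k :
  map_mx (@polyC F) (M ^+ k) = (map_mx (@polyC F) M) ^+ k.
Proof.
elim: k => [|k IH].
  by rewrite !expr0; apply/matrixP => i j; rewrite !mxE; case: (i == j).
by rewrite !exprSr; apply: etrans (map_mxM _ _ _) _; rewrite IH.
Qed.

Lemma char_poly_nil n (M : 'M[F]_n) k : M ^+ k = 0 -> char_poly M = 'X^n.
Proof.
case: n M => [|n] M Mk.
  by rewrite /char_poly det_mx00 expr0.
set Y : 'M[{poly F}]_n.+1 := ('X)%:M.
set M' := map_mx (@polyC F) M.
have cYM : GRing.comm Y M' by rewrite /GRing.comm -!mulmxE scalar_mxC.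
have h := subrXX_comm k cYM.
have M'k : M' ^+ k = 0.
  by rewrite /M' -map_mxXn Mk; apply/matrixP => i j; rewrite !mxE.
rewrite M'k subr0 in h.
have hd := congr1 determinant h.
rewrite det_mulmx in hd.
have hY : Y ^+ k = ('X ^+ k)%:M.
  elim: k {h hd M'k Mk} => [|k IH]; first by rewrite !expr0.
  by rewrite !exprSr IH; apply: etrans (mul_scalar_mx _ _) _; rewrite scale_scalar_mx.
rewrite hY det_scalar in hd.
have hdvd : char_poly M %| ('X - 0%:P) ^+ (k * n.+1).
  by rewrite subr0 exprM; apply/dvdpP; exists (\det (\sum_(i < k) Y ^+ (k.-1 - i) * M' ^+ i)); rewrite hd mulrC.
have /dvdp_exp_XsubCP [j _ hj] := hdvd.
rewrite subr0 in hj.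
move: hj; rewrite eqp_monic ?char_poly_monic ?monicXn // => /eqP hj.
have := size_char_poly M; rewrite hj size_polyXn => -[->].
by [].
Qed.

Lemma char_poly_sim n (P B D : 'M[F]_n) : P \in unitmx -> P *m B = D *m P ->
  char_poly B = char_poly D.
Proof.
move=> Pu PB.
set P' := map_mx (@polyC F) P.
have h : P' *m char_poly_mx B = char_poly_mx D *m P'.
  rewrite /char_poly_mx mulmxBr mulmxBl -!map_mxM PB.
  by rewrite mul_mx_scalar mul_scalar_mx.
have hd := congr1 determinant h.
rewrite !det_mulmx mulrC in hd.
apply: (mulIf _ hd).
rewrite /P' det_map_mx polyC_eq0 -unitfE -unitmxE //.
Qed.

Lemma char_poly_block n1 n2 (B1 : 'M[F]_n1) (B2 : 'M[F]_n2) :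
  char_poly (block_mx B1 0 0 B2) = char_poly B1 * char_poly B2.
Proof.
rewrite /char_poly /char_poly_mx scalar_mx_block map_block_mx.
rewrite !map_mx0 opp_block_mx add_block_mx !oppr0 !addr0.
by rewrite det_ublock.
Qed.

Lemma core n1 n2 N (B : 'M[F]_N) (K : 'M_(n1, N)) (Q : 'M_(n2, N)) B1 B2 k :
  (n1 + n2 = N)%N -> row_free (col_mx K Q) -> row_free K -> row_free Q ->
  K *m B = B1 *m K -> Q *m B = B2 *m Q ->
  K *m B ^+ k = 0 -> (kermx B :&: Q)%MS = 0 -> mup 0 (char_poly B) = n1.
Proof.
move=> e; subst N => PK rK rQ KB QB Kk capQ.
have PB : col_mx K Q *m B = block_mx B1 0 0 B2 *m col_mx K Q.
  by rewrite mul_col_mx mul_block_col !mul0mx addr0 add0r KB QB.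
rewrite (char_poly_sim _ PB); last by rewrite -row_free_unit.
rewrite char_poly_block.
have B1k : B1 ^+ k = 0.
  have h : forall j, K *m B ^+ j = B1 ^+ j *m K.
    elim=> [|j IH]; first by rewrite !expr0 mulmx1 mul1mx.
    rewrite !exprSr; apply: etrans (_ : K *m (B ^+ j *m B) = _) _ => //.
    rewrite mulmxA IH -mulmxA KB mulmxA.
    by apply: etrans (_ : (B1 ^+ j *m B1) *m K = _) _.
  apply: (row_free_inj rK); rewrite mul0mx -h //.
rewrite (char_poly_nil B1k).
have nr : ~~ root (char_poly B2) 0.
  rewrite /root horner_coef0 char_poly_det mulf_eq0 negb_or.
  rewrite expf_neq0 ?oppr_eq0 ?oner_eq0 //=.
  apply/det0P => -[v vn0 vB2].
  have : (v *m Q <= kermx B :&: Q)%MS.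
    rewrite sub_capmx submxMl andbT sub_kermx -mulmxA QB mulmxA vB2 mul0mx.
    by [].
  rewrite capQ submx0 => /eqP vQ.
  by move: vn0; rewrite (row_free_inj rQ (_ : v *m Q = 0 *m Q)) ?eqxx // mul0mx.
rewrite mupMl //.
have -> : 'X^n1 = ('X - (0 : F)%:P) ^+ n1 by rewrite subr0.
by rewrite mup_XsubCX eqxx.
Qed.

End LinAlg.
Lemma eqmxS (F : fieldType) m1 m2 n (A : 'M[F]_(m1, n)) (B : 'M_(m2, n)) :
  (A :=: B)%MS -> (A <= B)%MS.
Proof. by move=> e; rewrite e submx_refl. Qed.

Section GenKer.
Variables (F : fieldType) (n' : nat) (B : 'M[F]_n'.+1).
Local Notation n := n'.+1.

Definition k0 := mup 0 (char_poly B).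
Definition Kg := kermx (B ^+ k0).
Definition qg := char_poly B %/ 'X^k0.

Lemma chi_neq0 : char_poly B != 0.
Proof. by rewrite monic_neq0 // char_poly_monic. Qed.

Lemma chi_dec : char_poly B = qg * 'X^k0.
Proof.
rewrite /qg divpK //.
have := mup_geq 0 k0 chi_neq0; rewrite leqnn subr0 => /esym.
by move=> ->.
Qed.

Lemma qg_nroot : ~~ root qg 0.
Proof.
apply/negP => r.
have : ('X - 0%:P) ^+ k0.+1 %| char_poly B.
  rewrite chi_dec subr0 exprS dvdp_mul2r ?expf_neq0 ?polyX_eq0 //.
  by have := dvdp_XsubCl qg 0; rewrite subr0 => ->.
by rewrite -mup_geq ?chi_neq0 // ltnn.
Qed.

Lemma cop k : coprimep ('X ^+ k) qg.
Proof.
apply: coprimep_expl; rewrite coprimep_sym.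
by have := coprimep_XsubC qg 0; rewrite subr0 qg_nroot.
Qed.

Lemma kerXE k : kermxpoly B ('X ^+ k) = kermx (B ^+ k).
Proof. by rewrite /kermxpoly rmorphXn /= horner_mx_X. Qed.

Lemma full_dec : (1%:M <= Kg + kermxpoly B qg)%MS.
Proof.
have h := kermxpolyM B (cop k0).
rewrite kerXE in h.
rewrite -h mulrC -chi_dec /kermxpoly Cayley_Hamilton.
by rewrite kermx0 submx_refl.
Qed.

Lemma Kg_stable : (Kg *m B <= Kg)%MS.
Proof.
rewrite /Kg sub_kermx -mulmxA.
have -> : B *m B ^+ k0 = B ^+ k0 *m B by rewrite !mulmxE -exprS -exprSr.
by rewrite mulmxA mulmx_ker mul0mx.
Qed.

Lemma ker_sub k (z : 'rV[F]_n) : z *m B ^+ k = 0 -> (z <= Kg)%MS.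
Proof.
move=> zk.
have /sub_addsmxP [[u1 u2] /= hz] := submx_trans (submx1 z) full_dec.
set z1 := u1 *m Kg in hz.
have z1k : z1 *m B ^+ k0 = 0 by rewrite /z1 /Kg -mulmxA mulmx_ker mulmx0.
set z2 := u2 *m kermxpoly B qg in hz.
have hz2 : (z2 <= kermxpoly B ('X ^+ (k + k0)) :&: kermxpoly B qg)%MS.
  rewrite sub_capmx submxMl andbT kerXE sub_kermx.
  have -> : z2 = z - z1 by rewrite hz addrC addKr.
  rewrite exprD mulmxBl.
  have -> : B ^+ k * B ^+ k0 = B ^+ k *m B ^+ k0 by [].
  rewrite mulmxA zk mul0mx.
  have -> : B ^+ k *m B ^+ k0 = B ^+ k0 *m B ^+ k.
    by rewrite !mulmxE -!exprD addnC.
  by rewrite mulmxA z1k mul0mx subrr.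
rewrite mxdirect_kermxpoly ?cop // submx0 in hz2.
by rewrite hz (eqP hz2) addr0 submxMl.
Qed.

Lemma rank_Kg : \rank Kg = k0.
Proof.
set Q0 := kermxpoly B qg.
have cap0 : (Kg :&: Q0)%MS = 0 by rewrite /Kg -kerXE mxdirect_kermxpoly ?cop.
have hr : (\rank Kg + \rank Q0)%N = n.
  rewrite -mxrank_disjoint_sum //.
  apply/eqP; rewrite eqn_leq rank_leq_col /=.
  by have := mxrankS full_dec; rewrite mxrank1.
have [B1 hB1] : exists B1, row_base Kg *m B = B1 *m row_base Kg.
  apply/submxP; rewrite eq_row_base; apply: submx_trans (Kg_stable).
  by apply: submxMr; rewrite eq_row_base.
have [B2 hB2] : exists B2, row_base Q0 *m B = B2 *m row_base Q0.
  apply/submxP; rewrite eq_row_base.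
  apply: submx_trans (@comm_mx_stable_kermxpoly _ _ B B qg (erefl _)).
  by apply: submxMr; rewrite eq_row_base.
symmetry; apply: (@core F _ _ _ B (row_base Kg) (row_base Q0) B1 B2 k0 hr).
- rewrite /row_free -addsmxE.
  rewrite (adds_eqmx (eq_row_base Kg) (eq_row_base Q0)).
  by rewrite mxrank_disjoint_sum // hr.
- exact: row_base_free.
- exact: row_base_free.
- exact: hB1.
- exact: hB2.
- by apply/eqP; rewrite -sub_kermx (eq_row_base Kg).
- apply/eqP; rewrite -submx0 (cap_eqmx (eqmx_refl _) (eq_row_base Q0)) submx0; apply/eqP.
  by rewrite /Q0 -kermxpolyX mxdirect_kermxpoly // coprimep_sym; have := coprimep_XsubC qg 0; rewrite subr0 qg_nroot.
Qed.

End GenKer.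
Lemma subm_sub (F : fieldType) m1 m2 n (A B : 'M[F]_(m1, n)) (C : 'M_(m2, n)) :
  (A <= C)%MS -> (B <= C)%MS -> (A - B <= C)%MS.
Proof. by move=> hA hB; apply: addmx_sub => //; rewrite eqmx_opp. Qed.

Lemma char_poly_trmx (F : fieldType) n (M : 'M[F]_n) : char_poly M^T = char_poly M.
Proof.
rewrite /char_poly -det_tr; congr determinant.
by rewrite /char_poly_mx linearB /= tr_scalar_mx map_trmx trmxK.
Qed.

Section Cartan.
Variables (F : fieldType) (m' : nat) (A : 'M[F]_m'.+1).
Local Notation n := m'.+1.
Local Notation Em := (@Em F n).
Local Notation en := (@en F n).
Local Notation enc := (@enc F n).
Local Notation tt := (@tt F n).
Local Notation vp := (@vp F n).
Local Notation B := (Bm A).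
Local Notation br := (aA_bracket A).
Local Notation K := (Kg B).
Local Notation k := (k0 B).

Lemma ttD u v : tt (u + v) = tt u + tt v.
Proof. by rewrite /tt mulmxDl mxE. Qed.
Lemma ttZ a u : tt (a *: u) = a * tt u.
Proof. by rewrite /tt -scalemxAl mxE. Qed.
Lemma tt0 : tt 0 = 0.
Proof. by rewrite /tt mul0mx mxE. Qed.
Lemma ttEm w : tt (w *m Em) = 0.
Proof. by rewrite /tt -mulmxA Em_enc mulmx0 mxE. Qed.
Lemma vpEm w : vp (w *m Em) = w.
Proof. by rewrite /vp -mulmxA EmEmT mulmx1. Qed.
Lemma vp_en : vp en = 0.
Proof. by rewrite /vp en_EmT. Qed.
Lemma decomp u : u = tt u *: en + vp u *m Em.
Proof.
rewrite -{1}[u]mulmx1 -decomp1 mulmxDr !mulmxA tt_mul mul_scalar_mx.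
by [].
Qed.

Lemma subEm p z (X : 'M[F]_(p, n)) : (z <= X *m Em)%MS -> tt z = 0 /\ (vp z <= X)%MS.
Proof.
case/submxP => D ->; split; first by rewrite mulmxA ttEm.
by rewrite mulmxA vpEm submxMl.
Qed.

Lemma brEm u w : br u (w *m Em) = (- tt u *: (w *m B)) *m Em.
Proof. by rewrite brE ttEm vpEm scale0r sub0r scaleNr. Qed.

Lemma brEmL w s : br (w *m Em) s = (tt s *: (w *m B)) *m Em.
Proof. by rewrite brE ttEm vpEm scale0r subr0. Qed.

Lemma br_anti u v : br u v = - br v u.
Proof. by rewrite !brE -mulNmx opprB. Qed.

Lemma lcs_br S j u v : (u <= S)%MS -> (v <= aA_lcs A S j)%MS ->
  (br u v <= aA_lcs A S j.+1)%MS.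
Proof.
set L := aA_lcs A S j => uS vL /=.
set Sum := (\sum_(i < n.+1) _)%MS.
have step1 : forall i w, (w <= L)%MS -> (br (row i S) w <= Sum)%MS.
  move=> i w wL; rewrite brM.
  apply: submx_trans (submxMr _ wL) _.
  apply/row_subP => l; rewrite row_mul -brM.
  apply: (sumsmx_sup i) => //; apply: (sumsmx_sup l) => //.
  by rewrite genmxE.
rewrite br_anti eqmx_opp brM.
apply: submx_trans (submxMr _ uS) _.
apply/row_subP => i; rewrite row_mul -brM br_anti eqmx_opp.
exact: step1.
Qed.

Lemma lcs_sub p S j (M : 'M[F]_(p, n.+1)) : (forall y z, (y <= S)%MS -> (z <= aA_lcs A S j)%MS ->
   (br y z <= M)%MS) -> (aA_lcs A S j.+1 <= M)%MS.
Proof.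
move=> h /=; apply/sumsmx_subP => i _; apply/sumsmx_subP => l _.
by rewrite genmxE; apply: h; apply: row_sub.
Qed.

Definition S0 : 'M[F]_n.+1 := (en + K *m Em)%MS.

Lemma S0P y : (y <= S0)%MS = (vp y <= K)%MS.
Proof.
apply/idP/idP => [/sub_addsmxP [[u1 u2] /= ->] | h].
  rewrite /vp mulmxDl -!mulmxA en_EmT mulmx0 add0r EmEmT mulmx1.
  exact: submxMl.
rewrite [y]decomp; apply: addmx_sub_adds; first exact: scalemx_sub.
exact: submxMr.
Qed.

Lemma en_S0 : (en <= S0)%MS.
Proof. by rewrite S0P vp_en sub0mx. Qed.

Lemma vp_br u v : vp (br u v) = tt v *: (vp u *m B) - tt u *: (vp v *m B).
Proof. by rewrite brE vpEm. Qed.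

Lemma KB p (z : 'M[F]_(p, n)) : (z <= K)%MS -> (z *m B <= K)%MS.
Proof. by move=> h; apply: submx_trans (Kg_stable B); apply: submxMr. Qed.

Lemma S0_cartan : aA_cartan A S0.
Proof.
split.
- move=> u v; rewrite !S0P vp_br => hu hv.
  by apply: subm_sub; apply: scalemx_sub; apply: KB.
- exists k.+1; apply/eqP; rewrite -submx0.
  have h : forall j, (aA_lcs A S0 j.+1 <= K *m B ^+ j.+1 *m Em)%MS.
    elim=> [|j IH].
      apply: lcs_sub => y z; rewrite /= !S0P => hy hz.
      rewrite brE expr1; apply: submxMr; apply: subm_sub; apply: scalemx_sub.
        by apply: submxMr.
      by apply: submxMr.
    apply: lcs_sub => y z hy hz; have /subEm [tz vz] := submx_trans hz IH.
    rewrite brE tz scale0r sub0r -scaleNr; apply: submxMr; apply: scalemx_sub.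
    by rewrite exprSr mulmxA; apply: submxMr.
  apply: submx_trans (h k) _.
  by rewrite exprSr mulmxA /Kg mulmx_ker !mul0mx sub0mx.
- move=> x hx.
  have := hx _ en_S0; rewrite S0P vp_br vp_en mul0mx scaler0 subr0 tt_en scale1r.
  move=> h; rewrite S0P.
  apply: (@ker_sub _ _ B k.+1).
  by rewrite exprS mulmxA; apply/eqP; rewrite -sub_kermx.
Qed.

Lemma Em_free : row_free Em.
Proof.
rewrite /row_free eqn_leq rank_leq_row /=.
by have := mxrankM_maxl Em Em^T; rewrite EmEmT mxrank1.
Qed.

Lemma exists_x S : aA_cartan A S -> exists2 x, (x <= S)%MS & tt x = 1.
Proof.
case=> _ _ sn.
case: (S *m enc =P 0) => [Se|Sne].
  exfalso.
  have tts : forall s, (s <= S)%MS -> tt s = 0.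
    by move=> s /submxP [D ->]; rewrite /tt -mulmxA Se mulmx0 mxE.
  have allW : forall z : 'rV[F]_n, (z *m Em <= S)%MS.
    move=> z; apply: sn => s hs.
    by rewrite brEmL tts // scale0r mul0mx sub0mx.
  have : (en <= S)%MS.
    by apply: sn => s hs; rewrite brE; apply: allW.
  by move/tts; rewrite tt_en; apply/eqP; rewrite oner_eq0.
have [i hi] : exists i, (S *m enc) i 0 != 0.
  case: (pickP (fun i => (S *m enc) i 0 != 0)) => [i hi|h]; first by exists i.
  exfalso; apply: Sne; apply/matrixP => a b; rewrite ord1 [RHS]mxE.
  by move: (h a) => /= /negbFE /eqP.
have ti : tt (row i S) = (S *m enc) i 0 by rewrite /tt -row_mul mxE.
exists ((tt (row i S))^-1 *: row i S).
  by apply: scalemx_sub; apply: row_sub.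
by rewrite ttZ mulVf // ti.
Qed.

Lemma Wchar S x : aA_cartan A S -> (x <= S)%MS -> tt x = 1 ->
  forall w : 'rV[F]_n, (w *m Em <= S)%MS = (w <= K)%MS.
Proof.
case=> sa [k' nil] sn xS tx w; apply/idP/idP => h.
  have hj : forall j, ((w *m B ^+ j) *m Em <= aA_lcs A S j)%MS.
    elim=> [|j IH]; first by rewrite expr0 mulmx1.
    have := lcs_br xS IH; rewrite brEm tx scaleN1r mulNmx eqmx_opp.
    by rewrite exprSr mulmxA.
  have := hj k'; rewrite nil submx0 => /eqP h0.
  apply: (@ker_sub _ _ B k').
  by rewrite -[w *m B ^+ k']vpEm h0 /vp mul0mx.
have cl : forall z : 'rV[F]_n, ((z *m B) *m Em <= S)%MS -> (z *m Em <= S)%MS.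
  move=> z hz; apply: sn => s hs.
  by rewrite brEmL -scalemxAl; apply: scalemx_sub.
have ind : forall j (z : 'rV[F]_n), z *m B ^+ j = 0 -> (z *m Em <= S)%MS.
  elim=> [|j IH] z hz.
    by move: hz; rewrite expr0 mulmx1 => ->; rewrite mul0mx sub0mx.
  by apply: cl; apply: IH; rewrite -mulmxA -hz exprS.
apply: (ind k); apply/eqP; rewrite -sub_kermx; exact: h.
Qed.

Lemma rank_cartan S : aA_cartan A S -> \rank S = (mup 0 (char_poly A)).+1.
Proof.
move=> cS; have [x xS tx] := exists_x cS.
have W := Wchar cS xS tx.
have eqS : (S == x + K *m Em)%MS.
  apply/andP; split.
    apply/row_subP => i; set s := row i S.
    have sS : (s <= S)%MS by apply: row_sub.
    have -> : s = tt s *: x + (s - tt s *: x) by rewrite addrC subrK.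
    apply: addmx_sub_adds; first exact: scalemx_sub.
    set y := s - tt s *: x.
    have ty : tt y = 0 by rewrite /y ttD -scaleNr ttZ tx mulr1 subrr.
    have yE : y = vp y *m Em by rewrite {1}[y]decomp ty scale0r add0r.
    rewrite yE; apply: submxMr; rewrite -W -yE.
    by apply: subm_sub => //; apply: scalemx_sub.
  rewrite addsmx_sub xS /=; apply/row_subP => i.
  by rewrite row_mul W row_sub.
rewrite (eqmx_rank eqS) mxrank_disjoint_sum.
  rewrite rank_rV mxrankMfree ?Em_free // rank_Kg -char_poly_trmx.
  suff -> : x != 0 by [].
  by apply: contra_neq (oner_neq0 F) => x0; rewrite -tx x0 tt0.
apply/eqP/rowV0P => y; rewrite sub_capmx => /andP [/sub_rVP [a ->] /subEm [t _]].
by move: t; rewrite ttZ tx mulr1 => ->; rewrite scale0r.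
Qed.

End Cartan.
Lemma perm_roots (R : idomainType) (s t : seq R) :
  \prod_(x <- s) ('X - x%:P) = \prod_(x <- t) ('X - x%:P) -> perm_eq s t.
Proof.
elim: s t => [|a s IH] t.
  rewrite big_nil => h.
  have := size_prod_XsubC t id; rewrite -h size_poly1.
  by case: t {h} => // -[].
rewrite big_cons => h.
have at_ : a \in t.
  by rewrite -root_prod_XsubC -h rootM root_XsubC eqxx.
have pt := perm_to_rem at_.
rewrite (perm_big _ pt) big_cons /= in h.
have := mulfI (negbT (polyXsubC_eq0 a)) h => /IH hs.
by rewrite perm_sym; apply: (perm_trans pt); rewrite perm_cons perm_sym.
Qed.

Lemma trig_pow (R : comNzRingType) n (T : 'M[R]_n) p : is_trig_mx T ->
  is_trig_mx (T ^+ p) /\ forall i, (T ^+ p) i i = T i i ^+ p.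
Proof.
move=> /is_trig_mxP tT; elim: p => [|p [/is_trig_mxP IH1 IH2]].
  split; last by move=> i; rewrite expr0 !mxE eqxx.
  by apply/is_trig_mxP => i j lt; rewrite expr0 mxE eq_sym -(inj_eq val_inj) /= (gtn_eqF lt).
have hE : T ^+ p.+1 = T ^+ p *m T by rewrite exprSr.
split.
  apply/is_trig_mxP => i j lt; rewrite hE mxE big1 // => l _.
  case: (ltnP i l) => [il|li]; first by rewrite IH1 // mul0r.
  by rewrite tT ?mulr0 // (leq_ltn_trans li lt).
move=> i; rewrite hE mxE (bigD1 i) //= big1 ?addr0; first by rewrite IH2 exprSr.
move=> l /negbTE nl; case: (ltngtP i l) => [il|li|e].
- by rewrite IH1 // mul0r.
- by rewrite tT ?mulr0.
- by move: nl; rewrite (val_inj e) eqxx.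
Qed.

Lemma tr_lam (C : numClosedFieldType) n (M : 'M[C]_n) (lam : 'I_n -> C) p :
  char_poly M = \prod_(i < n) ('X - (lam i)%:P) -> \tr (M ^+ p) = \sum_i lam i ^+ p.
Proof.
case: n M lam => [|n] M lam hchi.
  by rewrite /mxtrace !big_ord0.
have [P Pu Ptrig] := Schur M (ltn0Sn n).
have Pun := unitarymx_unit Pu.
move: Ptrig; rewrite /similar_to /conjmx /= pinvmxE // => Ttrig.
set T := P *m M *m invmx P in Ttrig.
have PM : P *m M = T *m P by rewrite /T mulmxKV.
have PMp : P *m M ^+ p = T ^+ p *m P.
  elim: p => [|p IH]; first by rewrite !expr0 mulmx1 mul1mx.
  rewrite !exprSr; apply: etrans (_ : P *m (M ^+ p *m M) = _) _ => //.
  rewrite mulmxA IH -mulmxA PM mulmxA.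
  by apply: etrans (_ : (T ^+ p *m T) *m P = _) _.
have trE : \tr (M ^+ p) = \tr (T ^+ p).
  have -> : M ^+ p = invmx P *m (T ^+ p *m P) by rewrite -PMp mulKmx.
  by rewrite mxtrace_mulC -mulmxA mulmxV // mulmx1.
have [_ dg] := trig_pow p Ttrig.
rewrite trE /mxtrace (eq_bigr _ (fun i _ => dg i)).
have hc : \prod_(i < n.+1) ('X - (T i i)%:P) = \prod_(i < n.+1) ('X - (lam i)%:P).
  by rewrite -char_poly_trig // -hchi -(char_poly_sim Pun PM).
have : perm_eq (map (fun i => T i i) (index_enum 'I_n.+1)) (map lam (index_enum 'I_n.+1)).
  by apply: perm_roots; rewrite !big_map.
move=> hperm.
rewrite -(big_map (fun i => T i i) xpredT (fun x => x ^+ p)).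
rewrite -(big_map lam xpredT (fun x => x ^+ p)).
exact: perm_big.
Qed.

Lemma tr_map (F : fieldType) (C : fieldType) (f : {rmorphism F -> C}) n (M : 'M[F]_n) :
  f (\tr M) = \tr (map_mx f M).
Proof. by rewrite /mxtrace rmorph_sum; apply: eq_bigr => i _; rewrite mxE. Qed.

Lemma map_mxXf (F : fieldType) (C : fieldType) (f : {rmorphism F -> C}) n (M : 'M[F]_n) p :
  map_mx f (M ^+ p) = (map_mx f M) ^+ p.
Proof.
elim: p => [|p IH].
  by rewrite !expr0; apply/matrixP => i j; rewrite !mxE; case: (i == j); rewrite ?rmorph1 ?rmorph0.
by rewrite !exprSr; apply: etrans (map_mxM _ _ _) _; rewrite IH.
Qed.

Lemma concl_gen (F : fieldType) (C : numClosedFieldType) (iota : {rmorphism F -> C})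
  m' (A : 'M[F]_m'.+1) : lemma2_concl iota A.
Proof.
split.
  move=> p q hp hq h1 h2 h3; split; first exact: Cpq_part.
  move=> lam hchi.
  rewrite fmorph_div rmorphM /= !tr_map !map_mxXf.
  by rewrite !(tr_lam _ hchi).
split; first by exists (S0 A); exact: S0_cartan.
exact: rank_cartan.
Qed.

Theorem lemma2 (R : realType) (m : nat) (hm : (1 <= m)%N) :
  (forall A : 'M[R]_m, lemma2_concl (real_complex R) A) /\
  (forall A : 'M[R[i]]_m, lemma2_concl (@idfun R[i]) A).
Proof.
case: m hm => // m _; split => A; exact: concl_gen.
Qed.
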